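(* Let $P$ be a continuous poset. A persistence module $M$ over $P$ is ephemeral if and only if $j_*M=0$. In other words, the full subcategory of ephemeral modules equals the kernel of $j_*$.
   Context: Let $P$ be a poset. A subset is directed if nonempty and any two elements have an upper bound in it. $x\ll y$ ($x$ way below $y$) means: for every directed $D$ whose supremum exists with $y\le\sup D$, some $d\in D$ satisfies $x\le d$. $P$ is continuous if for each $p$ the set $\{x:x\ll p\}$ is directed with supremum $p$. A set $U\subseteq P$ is Scott-open if it is an up-set meeting every directed set whose supremum exists and lies in $U$; $P^\sigma$ is $P$ with the Scott topology. $k$ is a commutative ring with unity; a persistence module over $P$ is a functor $M$ from $P$ (as a category, $p\to q$ iff $p\le q$) to $k$-modules. For an up-set $U$, $M(U)=\varprojlim_{x\in U}M_x$. $j_*M$ denotes the sheaf of $k$-modules on $P^\sigma$ given by $U\mapsto M(U)$ for Scott-open $U$ (the direct image along the identity $j$ from $P$ with the Alexandrov topology to $P^\sigma$ of the sheaf associated to $M$). A persistence module $M$ is ephemeral if $M(p\le q)=0$ for all $p\ll q$. *)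

(* Defs.v *)
From HB Require Import structures.
From mathcomp Require Import all_boot all_order all_algebra.
Set Implicit Arguments. Unset Strict Implicit. Unset Printing Implicit Defensive.
Import Order.TTheory GRing.Theory.
Local Open Scope order_scope.

Section PosetNotions.
Context {disp : Order.disp_t} {P : porderType disp}.

Definition directed (D : P -> Prop) : Prop :=
  (exists d, D d) /\
  (forall a b, D a -> D b -> exists c, [/\ D c, a <= c & b <= c]).

Definition is_sup (D : P -> Prop) (s : P) : Prop :=
  (forall d, D d -> d <= s) /\
  (forall u, (forall d, D d -> d <= u) -> s <= u).

Definition way_below (x y : P) : Prop :=
  forall (D : P -> Prop) (s : P), directed D -> is_sup D s -> y <= s ->
    exists d, D d /\ x <= d.

Definition continuous_poset : Prop :=
  forall p : P, directed (fun x => way_below x p) /\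
                is_sup (fun x => way_below x p) p.

Definition upset (U : P -> Prop) : Prop :=
  forall x y, x <= y -> U x -> U y.

Definition scott_open (U : P -> Prop) : Prop :=
  upset U /\
  (forall (D : P -> Prop) (s : P), directed D -> is_sup D s -> U s ->
     exists d, D d /\ U d).

End PosetNotions.

Record pmodule {disp : Order.disp_t} (P : porderType disp) (k : comPzRingType) := PModule {
  pm_obj :> P -> lmodType k;
  pm_map : forall p q : P, p <= q -> {linear pm_obj p -> pm_obj q};
  pm_id : forall (p : P) (h : p <= p) (x : pm_obj p), pm_map h x = x;
  pm_comp : forall (p q r : P) (hpq : p <= q) (hqr : q <= r) (hpr : p <= r)
              (x : pm_obj p), pm_map hpr x = pm_map hqr (pm_map hpq x)
}.

Section Modules.
Context {disp : Order.disp_t} {P : porderType disp} {k : comPzRingType}.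

(* Elements of M(U) = lim_{x in U} M_x, realized concretely (standard model of
   a limit of k-modules) as compatible families over U. *)
Definition compatible_family (M : pmodule P k) (U : P -> Prop)
    (s : forall x : P, U x -> M x) : Prop :=
  forall (x y : P) (h : x <= y) (hx : U x) (hy : U y),
    @pm_map _ _ _ M _ _ h (s x hx) = s y hy.

Definition limit_zero (M : pmodule P k) (U : P -> Prop) : Prop :=
  forall s : forall x : P, U x -> M x, @compatible_family M U s ->
    forall (x : P) (hx : U x), s x hx = 0%R.

(* j_* M = 0 : the sheaf U |-> M(U) on the Scott topology vanishes. *)
Definition jstar_zero (M : pmodule P k) : Prop :=
  forall U : P -> Prop, scott_open U -> limit_zero M U.

Definition ephemeral (M : pmodule P k) : Prop :=
  forall (p q : P) (h : p <= q), way_below p q ->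
    forall x : M p, @pm_map _ _ _ M _ _ h x = 0%R.

End Modules.

(* Main.v *)
Require Import Defs.
From mathcomp Require Import all_boot all_order all_algebra.
Import Order.TTheory.
Local Open Scope order_scope.

Section Aux.
Context {disp : Order.disp_t} {P : porderType disp}.

Lemma wb_le {x y : P} : way_below x y -> x <= y.
Proof.
move=> H.
have [|||d [-> //]] := H (fun z => z = y) y.
- split; first by exists y.
  by move=> a b -> ->; exists y.
- by split; [move=> d -> | move=> u; apply].
- by [].
Qed.

Lemma le_wb {x y z : P} : x <= y -> way_below y z -> way_below x z.
Proof.
move=> xy H D s dD sD zs; have [d [Dd yd]] := H D s dD sD zs.
by exists d; split => //; apply: le_trans yd.
Qed.

Lemma wb_le' {x y z : P} : way_below x y -> y <= z -> way_below x z.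
Proof.
move=> H yz D s dD sD zs; apply: H dD sD _; exact: le_trans zs.
Qed.

Lemma interp (hc : continuous_poset (P := P)) {p s : P} :
  way_below p s -> exists z, way_below p z /\ way_below z s.
Proof.
move=> H.
pose E := fun y : P => exists z, way_below y z /\ way_below z s.
have dE : directed E.
  split.
    have [[z zs] _] := (hc s).1.
    have [[y yz] _] := (hc z).1.
    by exists y, z.
  move=> a b [z1 [a1 z1s]] [z2 [b2 z2s]].
  have [z3 [z3s z13 z23]] := (hc s).1.2 _ _ z1s z2s.
  have a3 := wb_le' a1 z13; have b3 := wb_le' b2 z23.
  have [c [c3 ac bc]] := (hc z3).1.2 _ _ a3 b3.
  by exists c; split => //; exists z3.
have sE : is_sup E s.
  split.
    move=> d [z [dz zs]]; exact: (le_trans (wb_le dz) (wb_le zs)).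
  move=> u Hu; apply: (hc s).2.2 => z zs.
  apply: (hc z).2.2 => y yz; apply: Hu; by exists z.
have [d [[z [dz zs]] pd]] := H E s dE sE (lexx s).
by exists z; split => //; apply: le_wb pd dz.
Qed.

End Aux.

Theorem mainTheorem4 (disp : Order.disp_t) (P : porderType disp)
    (k : comPzRingType) (M : pmodule P k) :
  continuous_poset (P := P) -> (ephemeral M <-> jstar_zero M).
Proof.
move=> hc; split.
- move=> He U [upU scU] s cs x hx.
  have [dx sx] := hc x.
  have [d [dD dU]] := scU _ x dx sx hx.
  rewrite -(cs d x (wb_le dD) dU hx).
  exact: He.
- move=> Hj p q h pq x.
  pose U := fun y : P => way_below p y.
  have oU : scott_open U.
    split.
      by move=> a b ab Ua; apply: wb_le' Ua ab.
    move=> D s dD sD Us.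
    have [z [pz zs]] := interp hc Us.
    have [d [Dd zd]] := zs D s dD sD (lexx s).
    by exists d; split => //; apply: wb_le' pz zd.
  pose f := fun (y : P) (hy : U y) => @pm_map _ _ _ M _ _ (wb_le hy) x.
  have cf : compatible_family f.
    move=> a b ab ha hb; rewrite /f.
    by rewrite -(pm_comp (wb_le ha) ab (wb_le hb)).
  have := Hj U oU f cf q pq.
  rewrite /f.
  by rewrite (bool_irrelevance (wb_le pq) h).
Qed.
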